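(* With $D$, $S$ and $A$ as in the context, the restriction map $\mathrm{Res}:\mathrm{Der}(D,A)\to\mathrm{Der}(\Phi(D),S)$, $\tau\mapsto\tau|_{\Phi(D)}$, is well defined and surjective.
   Context: $p$ is an odd prime, $d\geq 2$. $D=\langle y_1,\dots,y_d\rangle$ is a finite $p$-group of exponent $p$ and class $2$ with $|D/\Phi(D)|=p^d$ and $|\Phi(D)/\gamma_3(D)|=p^{\binom d2}$. $S=\langle a\rangle\cong\mathrm{F}_p$ is the trivial $D$-module; $\delta_j:D\to S$ is the homomorphism with $\delta_j(y_j)=a$, $\delta_j(y_i)=0$ ($i\ne j$). $A=S\oplus\bigoplus_{i=1}^d\langle r_i\rangle$, $\langle r_i\rangle\cong\mathrm{F}_p$, with action $(la+\sum_ik_ir_i)^g=la+\sum_ik_i(r_i-\delta_i(g))$. Since $\Phi(D)$ acts trivially on $S$, $\mathrm{Der}(\Phi(D),S)=\mathrm{Hom}(\Phi(D),S)$. *)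

(* Defs.v *)
From HB Require Import structures.
From mathcomp Require Import all_boot all_order all_algebra all_fingroup all_solvable.
From mathcomp Require Import maximal.
Set Implicit Arguments. Unset Strict Implicit. Unset Printing Implicit Defensive.
Import GRing.Theory.
Local Open Scope ring_scope.

Definition is_derivation (gT : finGroupType) (G : {set gT}) (V : zmodType)
  (act : V -> gT -> V) (f : gT -> V) : Prop :=
  forall g h, g \in G -> h \in G -> f (g * h)%g = act (f g) h + f h.

(* The module A = S (+) (+)_i <r_i> over F_p, coordinates (l, k):
   l a + sum_i k_i r_i  is represented by  (l, k). *)
Definition Amod (p d : nat) : zmodType := ('F_p * 'rV['F_p]_d)%type.

(* (l a + sum k_i r_i)^g = l a + sum k_i (r_i - delta_i(g))
                       = (l - sum_i k_i delta_i(g)) a + sum k_i r_i *)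
Definition Aact (p d : nat) (gT : finGroupType) (delta : 'I_d -> gT -> 'F_p)
  (v : Amod p d) (g : gT) : Amod p d :=
  (v.1 - \sum_(i < d) v.2 0 i * delta i g, v.2).

Definition inS (p d : nat) (l : 'F_p) : Amod p d := (l, 0).

Definition triv_act (p : nat) (gT : finGroupType) (v : 'F_p) (g : gT) : 'F_p := v.

(* Main.v *)
Require Import Defs.
From HB Require Import structures.
From mathcomp Require Import all_boot all_order all_algebra all_fingroup all_solvable.
From mathcomp Require Import maximal.
Import GRing.Theory.
Local Open Scope ring_scope.

Module Helpers.
Set Implicit Arguments. Unset Strict Implicit.
Local Open Scope group_scope.
Local Open Scope ring_scope.


Section Hom.
Variables (gT : finGroupType) (G : {group gT}) (V : zmodType) (phi : gT -> V).
Hypothesis hphi : forall g h, g \in G -> h \in G -> phi (g * h)%g = phi g + phi h.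

Lemma hom1 : phi 1%g = 0.
Proof.
have := hphi (group1 G) (group1 G); rewrite mulg1 => h.
by apply: (addrI (phi 1%g)); rewrite addr0 -h.
Qed.

Lemma homX x n : x \in G -> phi (x ^+ n)%g = phi x *+ n.
Proof.
move=> xG; elim: n => [|n IH]; first by rewrite expg0 hom1.
by rewrite expgS hphi ?groupX // IH mulrS.
Qed.

Lemma homV x : x \in G -> phi (x^-1)%g = - phi x.
Proof.
move=> xG; apply/eqP; rewrite -subr_eq0 opprK addrC -hphi ?groupV //.
by rewrite mulgV hom1.
Qed.

Lemma hom_prod n (X : nat -> gT) : (forall i, X i \in G) ->
  phi (\prod_(i < n) X i)%g = \sum_(i < n) phi (X i).
Proof.
move=> XG; elim: n => [|n IH]; first by rewrite !big_ord0 hom1.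
rewrite big_ord_recr big_ord_recr /= hphi ?IH //.
by apply: group_prod => i _.
Qed.

Lemma hom_comm x y : x \in G -> y \in G -> phi [~ x, y]%g = 0.
Proof.
move=> xG yG; rewrite /commg /conjg !hphi ?groupM ?groupV //.
rewrite !homV //. 
by rewrite (addrC (phi x)) addKr addNr.
Qed.

Lemma hom_Phi p : prime p -> exponent G = p -> forall x, x \in ('Phi(G))%g -> phi x = 0.
Proof.
move=> pp eG.
have gK : group_set [set x in G | phi x == 0].
  apply/group_setP; split; first by rewrite inE group1 hom1 eqxx.
  move=> x y; rewrite !inE => /andP[xG /eqP px] /andP[yG /eqP py].
  by rewrite groupM // hphi // px py addr0 eqxx.
have pG : (p.-group G)%g by rewrite -pnat_exponent eG pnat_id.
suff sPK : ('Phi(G))%g \subset Group gK.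
  by move=> x /(subsetP sPK); rewrite inE => /andP[_ /eqP].
rewrite (Phi_joing pG) join_subG; apply/andP; split.
  rewrite derg1 /commg_set gen_subG; apply/subsetP => _ /imset2P[x y xG yG ->].
  by rewrite inE groupR // hom_comm // eqxx.
rewrite /Mho gen_subG; apply/subsetP => z /imsetP[x]; rewrite inE => /andP[xG _] ->.
have ->: (x ^+ (pdiv #[x] ^ 1) = 1)%g.
  rewrite expn1; have := dvdn_exponent xG; rewrite eG.
  case: (eqVneq #[x]%g 1%N) => [/eqP|n1].
    by rewrite order_eq1 => /eqP -> _; rewrite expg1n.
  by move/(prime_nt_dvdP pp n1) => e; rewrite e pdiv_id // -e expg_order.
by rewrite inE group1 hom1 eqxx.
Qed.
End Hom.



Section Collect.
Variables (gT : finGroupType) (D : {group gT}) (V : zmodType) (sigma : gT -> V).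
Hypothesis cent : (D^`(1) \subset 'Z(D))%g.
Hypothesis hsig : forall g h, g \in D^`(1)%g -> h \in D^`(1)%g ->
  sigma (g * h)%g = sigma g + sigma h.

Lemma cZ z w : z \in D^`(1)%g -> w \in D -> commute z w.
Proof. by move=> /(subsetP cent) /centerP[_ c] wD; apply: c. Qed.

Lemma comm_hom x : x \in D -> forall g h, g \in D -> h \in D ->
  sigma [~ x, g * h]%g = sigma [~ x, g]%g + sigma [~ x, h]%g.
Proof.
move=> xD g h gD hD.
have c1 : [~ x, g]%g \in D^`(1)%g by rewrite derg1 mem_commg.
have c2 : [~ x, h]%g \in D^`(1)%g by rewrite derg1 mem_commg.
rewrite commgMJ.
have -> : ([~ x, g] ^ h = [~ x, g])%g by rewrite conjgE (cZ c1 hD) mulKg.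
by rewrite hsig // addrC.
Qed.

Definition W (Y : nat -> gT) n (U : nat -> nat) := (\prod_(i < n) Y i ^+ U i)%g.

Lemma W_in (Y : nat -> gT) n U : (forall i, Y i \in D) -> W Y n U \in D.
Proof. by move=> YD; apply: group_prod => i _; rewrite groupX. Qed.

Lemma collect (Y : nat -> gT) (U U' : nat -> nat) n : (forall i, Y i \in D) ->
  exists2 z, z \in D^`(1)%g &
   (W Y n U * W Y n U' = W Y n (fun i => U i + U' i)%N * z)%g /\
   sigma z = \sum_(i < n) \sum_(j < i) sigma [~ Y i, Y j]%g *+ (U i * U' j).
Proof.
move=> YD; elim: n => [|n [z zD [E sz]]].
  exists 1%g; first exact: group1.
  split; first by rewrite /W !big_ord0 !mulg1.
  by rewrite big_ord0 (hom1 hsig).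
set a := (Y n ^+ U n)%g; set b := (Y n ^+ U' n)%g.
set c := [~ a, W Y n U']%g.
have aD : a \in D by rewrite groupX.
have bD : b \in D by rewrite groupX.
have WD : W Y n U' \in D by apply: W_in.
have cD : c \in D^`(1)%g by rewrite derg1 mem_commg.
exists (z * c)%g; first by rewrite groupM.
split.
  rewrite /W !big_ord_recr /= -!/(W Y n _) expgD -/a -/b.
  move: cD; rewrite /c; move: (commgC a (W Y n U')).
  set c0 := [~ a, W Y n U']%g; clearbody c0 => Ec cD0.
  rewrite !mulgA -(mulgA (W Y n U) a) Ec !mulgA E -!mulgA; congr (_ * _)%g.
  rewrite (cZ cD0 bD) !mulgA; congr (_ * c0)%g.
  by rewrite -mulgA (cZ zD (groupM aD bD)).
rewrite hsig // sz big_ord_recr /=; congr (_ + _).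
have cYD : [~ Y n, W Y n U']%g \in D^`(1)%g by rewrite derg1 mem_commg.
rewrite /c /a commXg; last exact: commute_sym (cZ cYD (YD n)).
rewrite (homX hsig) // [W Y n U']/W (@hom_prod _ _ _ _ (comm_hom (YD n)) n (fun j => (Y j ^+ U' j)%g)); last by move=> i; rewrite groupX.
rewrite -sumrMnl; apply: eq_bigr => j _.
by rewrite (homX (comm_hom (YD n))) // mulnC mulrnA.
Qed.
End Collect.

Section WLemmas.
Variable gT : finGroupType.
Implicit Types Y : nat -> gT.

Lemma W_ext Y n U U' : (forall i, (i < n)%N -> (Y i ^+ U i = Y i ^+ U' i)%g) ->
  W Y n U = W Y n U'.
Proof. by move=> h; apply: eq_bigr => i _; apply: h. Qed.

Lemma W_zero Y n U : (forall i, (i < n)%N -> U i = 0%N) -> W Y n U = 1%g.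
Proof. by move=> h; apply: big1 => i _; rewrite h // expg0. Qed.

Lemma W_single Y n k : (k < n)%N -> W Y n (fun j => if j == k then 1%N else 0%N) = Y k.
Proof.
elim: n => [//|n IH] kn; move: IH; rewrite /W big_ord_recr /= => IH.
case: (ltngtP k n) => [kn'|nk|->].
  by rewrite (IH kn') expg0 mulg1.
  by move: kn; rewrite ltnS leqNgt nk.
rewrite expg1 big1 ?mul1g // => i _; by rewrite (ltn_eqF (ltn_ord i)) expg0.
Qed.
End WLemmas.



Lemma Fp_valK p (x : 'F_p) : (nat_of_ord x)%:R = x.
Proof. exact: natr_Zp. Qed.
Lemma Fp_valD p (x y : 'F_p) : prime p -> nat_of_ord (x + y) = ((nat_of_ord x + nat_of_ord y) %% p)%N.
Proof. by move=> pp; rewrite -{1}(Fp_valK x) -{1}(Fp_valK y) -natrD val_Fp_nat. Qed.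
Lemma Fp_val1 p : prime p -> nat_of_ord (1 : 'F_p) = 1%N.
Proof. by move=> pp; rewrite -(natr_Zp 1) val_Fp_nat // modn_small // prime_gt1. Qed.

End Helpers.
Import Helpers.

Theorem lemma3p7 (p d : nat) (gT : finGroupType) (D : {group gT})
  (y : 'I_d -> gT) (delta : 'I_d -> gT -> 'F_p) :
  prime p -> odd p -> (2 <= d)%N ->
  D :=: <<[set y i | i : 'I_d]>>%g ->
  exponent D = p ->
  nil_class D = 2%N ->
  #|(D / 'Phi(D))%g| = (p ^ d)%N ->
  #|('Phi(D) / 'L_3(D))%g| = (p ^ 'C(d, 2))%N ->
  (forall j g h, g \in D -> h \in D -> delta j (g * h)%g = delta j g + delta j h) ->
  (forall j i, delta j (y i) = (i == j)%:R) ->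
  (forall tau : gT -> Amod p d,
     is_derivation D (Aact delta) tau ->
     (forall x, x \in ('Phi(D))%g -> tau x = inS d (tau x).1) /\
     is_derivation ('Phi(D))%g (@triv_act p gT) (fun x => (tau x).1)) /\
  (forall sigma : gT -> 'F_p,
     is_derivation ('Phi(D))%g (@triv_act p gT) sigma ->
     exists tau : gT -> Amod p d,
       is_derivation D (Aact delta) tau /\
       forall x, x \in ('Phi(D))%g -> tau x = inS d (sigma x)).
Proof.
move=> pp oddp d2 Dgen eD ncl oPhi oPhiL deltaM deltay.
have pG : (p.-group D)%g by rewrite -pnat_exponent eD pnat_id.
have sDZ : (D^`(1) \subset 'Z(D))%g by rewrite -nil_class2 ncl.
have sDP : (D^`(1) \subset 'Phi(D))%g by rewrite (Phi_joing pG) joing_subl.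
have sPD : ('Phi(D) \subset D)%g by apply: Phi_sub.
have dPhi : forall j x, x \in ('Phi(D))%g -> delta j x = 0.
  by move=> j; apply: (hom_Phi (deltaM j) pp eD).
split.
  move=> tau dtau.
  have hk : forall i g h, g \in D -> h \in D ->
      (tau (g * h)%g).2 0 i = (tau g).2 0 i + (tau h).2 0 i.
    by move=> i g h gD hD; rewrite dtau // /Aact /= mxE.
  have k0 : forall x, x \in ('Phi(D))%g -> (tau x).2 = 0.
    move=> x xP; apply/rowP => i; rewrite mxE.
    exact: (hom_Phi (hk i) pp eD xP).
  split.
    by move=> x xP; rewrite /inS -(k0 x xP); case: (tau x).
  move=> g h gP hP; have gD := subsetP sPD g gP; have hD := subsetP sPD h hP.
  rewrite /triv_act dtau // /Aact /= k0 // big1 ?subr0 // => i _.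
  by rewrite mxE mul0r.
move=> sigma dsig.
have hsig : forall g h, g \in D^`(1)%g -> h \in D^`(1)%g ->
    sigma (g * h)%g = sigma g + sigma h.
  by move=> g h gD hD; apply: dsig; apply: (subsetP sDP).
pose Y := fun i : nat => oapp y 1%g (insub i).
have yD : forall i, y i \in D by move=> i; rewrite Dgen mem_gen // imset_f.
have YD : forall i, Y i \in D by move=> i; rewrite /Y; case: insub => //= o.
have Yp : forall i, (Y i ^+ p = 1)%g by move=> i; rewrite -eD expg_exponent.
pose U := fun g (i : nat) => oapp (fun o => nat_of_ord (delta o g)) 0%N (insub i).
pose Wg := fun g => W Y d (U g).
have WgD : forall g, Wg g \in D by move=> g; apply: W_in.
have UM : forall g h, g \in D -> h \in D ->
    Wg (g * h)%g = W Y d (fun i => U g i + U h i)%N.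
  move=> g h gD hD; apply: W_ext => i id.
  rewrite /U insubT /= deltaM // Fp_valD // expg_mod //.
have key : forall g h, g \in D -> h \in D ->
    (g * (Wg g)^-1)%g \in D^`(1)%g -> (h * (Wg h)^-1)%g \in D^`(1)%g ->
    exists2 z, z \in D^`(1)%g &
      ((g * h) * (Wg (g * h))^-1 = g * (Wg g)^-1 * (h * (Wg h)^-1 * z))%g /\
      sigma z = \sum_(i < d) \sum_(j < i) sigma [~ Y i, Y j]%g *+ (U g i * U h j).
  move=> g h gD hD c1D c2D.
  have [z zD [E sz]] := collect sDZ hsig (U g) (U h) d YD.
  exists z => //; split => //.
  rewrite UM //.
  have -> : W Y d (fun i => U g i + U h i)%N = (Wg g * Wg h * z^-1)%g by rewrite E mulgK.
  move: c1D c2D; rewrite -/(Wg g) -/(Wg h).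
  set W1 := Wg g; set W2 := Wg h.
  have W1D : W1 \in D by apply: WgD.
  have W2D : W2 \in D by apply: WgD.
  clearbody W1 W2.
  move=> _; have [c2 Ec2] : exists c2, c2 = (h * W2^-1)%g by eexists.
  rewrite -Ec2 => c2D.
  have -> : h = (c2 * W2)%g by rewrite Ec2 mulgKV.
  rewrite !invMg invgK !mulgA.
  rewrite -(mulgA _ z) (cZ sDZ zD (groupVr W2D)) mulgA mulgK.
  rewrite -!mulgA; congr (g * _)%g.
  by rewrite mulgA (cZ sDZ (groupM c2D zD) (groupVr W1D)).
have U1 : forall i, U 1%g i = 0%N.
  by move=> i; rewrite /U; case: insub => //= o; rewrite (hom1 (deltaM o)).
have Uy : forall i j, U (y i) j = (if j == nat_of_ord i then 1 else 0)%N.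
  move=> i j; rewrite /U; case: insubP => [o _ <-|] /=.
    rewrite deltay; case: (eqVneq i o) => [->|ne]; first by rewrite eqxx Fp_val1.
    by rewrite eq_sym (inj_eq val_inj) (negbTE ne).
  by move=> jd; case: eqP => // ej; move: jd; rewrite ej ltn_ord.
have Wy : forall i, Wg (y i) = y i.
  move=> i; rewrite /Wg (W_ext (U' := fun j => if j == nat_of_ord i then 1%N else 0%N)).
    by rewrite W_single // /Y valK.
  by move=> j _; rewrite Uy.
have inD1 : forall g, g \in D -> (g * (Wg g)^-1)%g \in D^`(1)%g.
  have gS : group_set [set g in D | (g * (Wg g)^-1)%g \in D^`(1)%g].
    apply/group_setP; split.
      by rewrite inE group1 /= /Wg W_zero // invg1 mulg1 group1.
    move=> g h; rewrite !inE => /andP[gD c1] /andP[hD c2]; rewrite groupM //.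
    have [z zD [E _]] := key g h gD hD c1 c2.
    by rewrite E; apply: groupM => //; apply: groupM.
  move=> g gD; have : g \in Group gS.
    move: g gD; apply/subsetP; rewrite {1}Dgen gen_subG.
    by apply/subsetP => _ /imsetP[i _ ->]; rewrite inE yD /= Wy mulgV group1.
  by rewrite inE => /andP[].
pose lam := fun (b a : 'I_d) => sigma [~ y b, y a]%g.
pose k := fun g => \row_(a < d) \sum_(b < d)
   (if (a < b)%N then - lam b a else 0) * delta b g.
pose f := fun g => sigma (g * (Wg g)^-1)%g.
have UPhi : forall x, x \in ('Phi(D))%g -> forall i, U x i = 0%N.
  by move=> x xP i; rewrite /U; case: insub => //= o; rewrite dPhi.
exists (fun g => (f g, k g)); split.
  move=> g h gD hD; rewrite /Aact /=.
  have [z zD [E sz]] := key g h gD hD (inD1 g gD) (inD1 h hD).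
  have addP : forall u v : Amod p d, u + v = (u.1 + v.1, u.2 + v.2) by [].
  rewrite addP /=; congr (_, _).
    have c1D := inD1 g gD; have c2D := inD1 h hD.
    rewrite /f E (hsig _ _ c1D (groupM c2D zD)) (hsig _ _ c2D zD).
    suff -> : sigma z = - \sum_(i < d) k g 0 i * delta i h by rewrite addrA addrAC.
    rewrite sz.
    transitivity (\sum_(i < d) \sum_(j < d)
        (if (j < i)%N then lam i j * (delta i g * delta j h) else 0)).
      apply: eq_bigr => i _.
      rewrite (big_ord_widen d (fun j => sigma [~ Y i, Y j]%g *+ (U g i * U h j)));
        last exact: ltnW (ltn_ord i).
      rewrite big_mkcond; apply: eq_bigr => j _; case: ifP => // _.
      by rewrite /Y /U !valK /= -mulr_natr natrM !Fp_valK.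
    rewrite exchange_big -sumrN; apply: eq_bigr => j _.
    rewrite mxE mulr_suml -sumrN; apply: eq_bigr => i _.
    case: ifP => _; last by rewrite !mul0r oppr0.
    by rewrite !mulNr opprK mulrA.
  by apply/rowP => a; rewrite !mxE -big_split; apply: eq_bigr => b _; rewrite deltaM // mulrDr.
move=> x xP; rewrite /inS; congr (_, _).
  by rewrite /f /Wg W_zero ?invg1 ?mulg1 // => i _; rewrite UPhi.
by apply/rowP => a; rewrite !mxE big1 // => b _; rewrite dPhi // mulr0.
Qed.
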